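(* Let $R$ be a maximal subring of a ring $T$ such that the conductor $(R:T)$ is a prime ideal of $T$ which is not a maximal ideal of $T$. Then $R$ is integrally closed in $T$.
   Context: All rings are commutative with $1\neq0$ and subrings are unital. A maximal subring is a proper subring maximal with respect to inclusion among proper subrings. The conductor is $(R:T)=\{x\in T\mid Tx\subseteq R\}$. *)

(* Defs.v *)
From HB Require Import structures.
From mathcomp Require Import all_boot all_order all_algebra.
Set Implicit Arguments. Unset Strict Implicit. Unset Printing Implicit Defensive.
Import GRing.Theory.
Local Open Scope ring_scope.

Section Defs.
Variable T : comNzRingType.

Definition is_subring (S : T -> Prop) : Prop :=
  [/\ S 1, (forall x y, S x -> S y -> S (x - y)) &
      (forall x y, S x -> S y -> S (x * y))].

Definition subset (A B : T -> Prop) : Prop := forall x, A x -> B x.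

Definition proper_set (S : T -> Prop) : Prop := exists x, ~ S x.

Definition maximal_subring (R : T -> Prop) : Prop :=
  [/\ is_subring R, proper_set R &
      forall S, is_subring S -> proper_set S -> subset R S -> subset S R].

Definition conductor (R : T -> Prop) : T -> Prop :=
  fun x => forall t : T, R (t * x).

Definition is_ideal (I : T -> Prop) : Prop :=
  [/\ I 0, (forall x y, I x -> I y -> I (x - y)) &
      (forall t x, I x -> I (t * x))].

Definition prime_ideal (I : T -> Prop) : Prop :=
  [/\ is_ideal I, ~ I 1 & forall x y, I (x * y) -> I x \/ I y].

Definition maximal_ideal (I : T -> Prop) : Prop :=
  [/\ is_ideal I, ~ I 1 &
      forall J, is_ideal J -> ~ J 1 -> subset I J -> subset J I].

Definition integral_over (R : T -> Prop) (x : T) : Prop :=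
  exists p : {poly T}, [/\ p \is monic, (forall i, R p`_i) & root p x].

Definition integrally_closed_in (R : T -> Prop) : Prop :=
  forall x : T, integral_over R x -> R x.

End Defs.

(* Main.v *)
Require Import Defs.
From mathcomp Require Import all_boot all_order all_algebra.
From Stdlib Require Import Classical.
From mathcomp Require Import ring.
From Stdlib Require Import Classical.
Set Implicit Arguments. Unset Strict Implicit. Unset Printing Implicit Defensive.
Import GRing.Theory.
Local Open Scope ring_scope.

Lemma sr0 (T : comNzRingType) (R : T -> Prop) : is_subring R -> R 0.
Proof. by case=> h1 hB _; rewrite -(subrr 1); apply: hB. Qed.

Lemma srN (T : comNzRingType) (R : T -> Prop) : is_subring R -> forall x, R x -> R (- x).
Proof. move=> HR x hx; rewrite -sub0r; case: (HR) => _ hB _; apply: hB => //; exact: sr0. Qed.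

Lemma srD (T : comNzRingType) (R : T -> Prop) : is_subring R -> forall x y, R x -> R y -> R (x + y).
Proof. move=> HR x y hx hy; rewrite -[y]opprK; case: (HR) => _ hB _; apply: hB => //; exact: srN. Qed.

Lemma srM (T : comNzRingType) (R : T -> Prop) : is_subring R -> forall x y, R x -> R y -> R (x * y).
Proof. by case. Qed.

Lemma srsum (T : comNzRingType) (R : T -> Prop) (I : Type) (r : seq I) (P : pred I) (F : I -> T) :
  is_subring R -> (forall i, P i -> R (F i)) -> R (\sum_(i <- r | P i) F i).
Proof. move=> HR h; apply: big_ind => //; [exact: sr0 | exact: srD]. Qed.

Lemma srprod (T : comNzRingType) (R : T -> Prop) (I : Type) (r : seq I) (P : pred I) (F : I -> T) :
  is_subring R -> (forall i, P i -> R (F i)) -> R (\prod_(i <- r | P i) F i).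
Proof. move=> HR h; apply: big_ind => //; [by case: HR | exact: srM]. Qed.

Lemma srsign (T : comNzRingType) (R : T -> Prop) (k : nat) : is_subring R -> R ((-1) ^+ k).
Proof. move=> HR; elim: k => [|k IH]; first by rewrite expr0; case: HR.
rewrite exprS; apply: srM => //; apply: srN => //; by case: HR. Qed.

Lemma srdet (T : comNzRingType) (R : T -> Prop) (n : nat) (A : 'M[T]_n) : is_subring R ->
  (forall i j, R (A i j)) -> R (\det A).
Proof. move=> HR h; rewrite /determinant; apply: srsum => // s _.
apply: srM => //; first exact: srsign. by apply: srprod. Qed.

Lemma sradj (T : comNzRingType) (R : T -> Prop) (n : nat) (A : 'M[T]_n) : is_subring R ->
  (forall i j, R (A i j)) -> forall i j, R (\adj A i j).
Proof. move=> HR h i j; rewrite mxE /cofactor; apply: srM => //; first exact: srsign.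
apply: srdet => // k l; rewrite !mxE; exact: h. Qed.

Lemma iddet (T : comNzRingType) (J : T -> Prop) (n : nat) (A B : 'M[T]_n) : is_ideal J ->
  (forall i j, J (A i j - B i j)) -> J (\det A - \det B).
Proof.
case=> J0 JB JM h.
have JN x : J x -> J (- x) by move=> hx; rewrite -sub0r; apply: (JB).
have JD x y : J x -> J y -> J (x + y) by move=> hx hy; rewrite -[y]opprK; apply: (JB) => //; apply: (JN).
rewrite /determinant.
apply: (big_ind2 (fun u v => J (u - v))); first by rewrite subrr.
  by move=> a b c d h1 h2; rewrite opprD addrACA; apply: (JD).
move=> s _; rewrite -mulrBr; apply: (JM).
apply: (big_ind2 (fun u v => J (u - v))); first by rewrite subrr.
  move=> a b c d h1 h2.
  have -> : a * c - b * d = a * (c - d) + d * (a - b) by ring.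
  by apply: (JD); apply: (JM).
by move=> i _; apply: h.
Qed.
Definition Vsp (T : comNzRingType) (R : T -> Prop) (m : nat) (x t : T) :=
  exists v : 'I_m.+1 -> T, (forall k, R (v k)) /\ t = \sum_(k < m.+1) v k * x ^+ k.

Lemma xpow (T : comNzRingType) (m : nat) (x : T) (p : {poly T}) :
  p \is monic -> size p = m.+2 -> root p x ->
  x ^+ m.+1 = - \sum_(i < m.+1) p`_i * x ^+ i.
Proof.
move=> mp sp /rootP; rewrite horner_coef sp big_ord_recr /=.
have -> : p`_m.+1 = 1 by move/monicP: mp; rewrite lead_coefE sp.
by rewrite mul1r => /eqP; rewrite addrC addr_eq0 => /eqP.
Qed.

Lemma Vx (T : comNzRingType) (R : T -> Prop) (m : nat) (x : T) (p : {poly T}) :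
  p \is monic -> size p = m.+2 -> root p x -> (forall i, R p`_i) -> is_subring R ->
  forall t, Vsp R m x t -> Vsp R m x (x * t).
Proof.
move=> mp sp rp pR HR t [v [vR ->]].
exists (fun k : 'I_m.+1 => (if (k : nat) is j.+1 then v (inord j) else 0) - v ord_max * p`_k).
split.
  move=> k; case: (HR) => h1 hB hM; apply: hB; last by apply: hM.
  case: (k : nat) => [|j]; [ exact: sr0 | exact: vR].
have e1 : \sum_(k < m.+1) (if (k : nat) is j.+1 then v (inord j) else 0) * x ^+ k
   = \sum_(k < m) v (widen_ord (leqnSn m) k) * x ^+ k.+1.
  rewrite big_ord_recl /= mul0r add0r; apply: eq_bigr => k _.
  rewrite /bump /= !add1n !add0n; congr (v _ * _); apply: val_inj; rewrite /= inordK // ltnS ltnW //.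
rewrite mulr_sumr; symmetry.
under eq_bigr => k _ do rewrite mulrBl -mulrA.
rewrite sumrB e1 -[\sum_(i < m.+1) v ord_max * _]mulr_sumr -(opprK (\sum_(i < m.+1) p`_i * x ^+ i)) -(xpow mp sp rp) mulrN opprK.
rewrite [RHS]big_ord_recr /=; congr (_ + _).
  by apply: eq_bigr => k _; rewrite exprS mulrCA.
by rewrite exprS mulrCA.
Qed.




Lemma V0 (T : comNzRingType) (R : T -> Prop) m x : is_subring R -> Vsp R m x 0.
Proof. move=> HR; exists (fun _ => 0); split=> [k|]; first exact: sr0.
by rewrite big1 // => k _; rewrite mul0r. Qed.

Lemma VB (T : comNzRingType) (R : T -> Prop) m x s t : is_subring R ->
  Vsp R m x s -> Vsp R m x t -> Vsp R m x (s - t).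
Proof. move=> HR [v [vR ->]] [w [wR ->]]; exists (fun k => v k - w k); split.
  by move=> k; case: (HR) => _ hB _; apply: hB.
by rewrite -sumrB; apply: eq_bigr => k _; rewrite mulrBl. Qed.

Lemma VD (T : comNzRingType) (R : T -> Prop) m x s t : is_subring R ->
  Vsp R m x s -> Vsp R m x t -> Vsp R m x (s + t).
Proof. move=> HR hs ht; have -> : s + t = s - (0 - t) by rewrite sub0r opprK.
apply: VB => //; apply: VB => //; exact: V0. Qed.

Lemma VZ (T : comNzRingType) (R : T -> Prop) m x r t : is_subring R ->
  R r -> Vsp R m x t -> Vsp R m x (r * t).
Proof. move=> HR hr [v [vR ->]]; exists (fun k => r * v k); split.
  by move=> k; apply: srM.
by rewrite mulr_sumr; apply: eq_bigr => k _; rewrite mulrA. Qed.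

Lemma VR (T : comNzRingType) (R : T -> Prop) m x r : is_subring R ->
  R r -> Vsp R m x r.
Proof. move=> HR hr; exists (fun k : 'I_m.+1 => if (k : nat) == 0%N then r else 0); split.
  by move=> k; case: ifP => _ //; exact: sr0.
rewrite big_ord_recl /= expr0 mulr1 big1 ?addr0 // => k _; by rewrite mul0r. Qed.

Lemma Vxk (T : comNzRingType) (R : T -> Prop) (m : nat) (x : T) (p : {poly T}) :
  p \is monic -> size p = m.+2 -> root p x -> (forall i, R p`_i) -> is_subring R ->
  forall k t, Vsp R m x t -> Vsp R m x (x ^+ k * t).
Proof. move=> mp sp rp pR HR; elim=> [|k IH] t ht; first by rewrite expr0 mul1r.
by rewrite exprS -mulrA; apply: (Vx mp sp rp pR HR); apply: IH. Qed.

Lemma VM (T : comNzRingType) (R : T -> Prop) (m : nat) (x : T) (p : {poly T}) :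
  p \is monic -> size p = m.+2 -> root p x -> (forall i, R p`_i) -> is_subring R ->
  forall s t, Vsp R m x s -> Vsp R m x t -> Vsp R m x (s * t).
Proof. move=> mp sp rp pR HR s t [v [vR ->]] ht; rewrite mulr_suml.
apply: big_ind => //; first exact: V0. by move=> a b; apply: VD.
move=> k _; rewrite -mulrA; apply: VZ => //; exact: (Vxk mp sp rp pR HR).
Qed.

Lemma Wlem (T : comNzRingType) (R : T -> Prop) b : maximal_subring R ->
  ~ conductor R b -> forall t, exists r s, R r /\ t = r + b * s.
Proof.
case=> HR _ Hmax nb.
pose W t := exists r s, R r /\ t = r + b * s.
have WS : is_subring W.
  split.
  - by exists 1, 0; split; [case: HR | rewrite mulr0 addr0].
  - move=> u v [r [s [hr ->]]] [r' [s' [hr' ->]]]; exists (r - r'), (s - s'); split.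
      by case: HR => _ hB _; apply: hB.
    by rewrite mulrBr; ring.
  - move=> u v [r [s [hr ->]]] [r' [s' [hr' ->]]]; exists (r * r'), (s * r' + r * s' + b * s * s'); split.
      exact: srM.
    ring.
move=> t; apply: NNPP => nWt.
have sRW : Defs.subset R W by move=> u hu; exists u, 0; rewrite mulr0 addr0.
have := Hmax W WS (ex_intro _ t nWt) sRW => sWR.
apply: nb => u; apply: sWR; exists 0, u; split; [exact: sr0 | by rewrite add0r mulrC].
Qed.

Theorem lemma3p1 (T : comNzRingType) (R : T -> Prop) :
  maximal_subring R ->
  prime_ideal (conductor R) ->
  ~ maximal_ideal (conductor R) ->
  integrally_closed_in R.
Proof.
move=> Hms [[I0 IB IM] I1 Iprime] nmax x [p [mp pR rp]].
have [HR Rprop Rmax] := Hms.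
apply: NNPP => nRx.
have [J [JI [J1 [IJ [j [Jj nIj]]]]]] : exists J, is_ideal J /\ ~ J 1 /\ Defs.subset (conductor R) J /\
    exists j, J j /\ ~ conductor R j.
  apply: NNPP => nJ; apply: nmax; split => //.
  move=> J hJ hJ1 hIJ u Ju; apply: NNPP => nIu; apply: nJ.
  by exists J; split=> //; split=> //; split=> //; exists u.
have [JJ0 JB JM] := JI.
have sp : exists m, size p = m.+2.
  case E: (size p) => [|[|m]]; last by exists m.
  - by move: (monic_neq0 mp); rewrite -size_poly_eq0 E.
  - move/rootP: rp; rewrite horner_coef E big_ord1 expr0 mulr1.
    have -> : p`_0 = 1 by move/monicP: mp; rewrite lead_coefE E.
    by move=> /eqP; rewrite oner_eq0.
have [m spm] := sp.
have V1 : Vsp R m x 1 by apply: VR => //; case: HR.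
have VT : forall t, Vsp R m x t.
  move=> t; apply: NNPP => nVt.
  have VS : is_subring (Vsp R m x).
    split => //; [by move=> *; apply: VB | exact: (VM mp spm rp pR HR)].
  have sRV : Defs.subset R (Vsp R m x) by move=> u hu; apply: VR.
  have := Rmax _ VS (ex_intro _ t nVt) sRV => sVR.
  apply: nRx; apply: sVR; have := Vx mp spm rp pR HR V1; by rewrite mulr1.
have nIjj : ~ conductor R (j * j) by move=> /Iprime [].
have [a [s [Ra ea]]] := Wlem Hms nIjj j.
have ea' : a = j - j * j * s by rewrite {1}ea addrK.
have Ja : J a.
  have -> : a = j - (j * s) * j by rewrite {1}ea'; ring.
  by apply: JB => //; apply: JM.
have nIa : ~ conductor R a.
  have -> : a = j * (1 - j * s) by rewrite {1}ea'; ring.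
  move=> /Iprime [] // /IJ h; apply: J1.
  have -> : (1 : T) = (1 - j * s) - ((- s) * j) by ring.
  by apply: JB => //; apply: JM.
pose c := a * a.
have nIc : ~ conductor R c by move=> /Iprime [].
have Rc : R c by apply: srM.
have Jc : J c by apply: JM.
have HW := Wlem Hms nIc.
have : forall i : 'I_m.+1, exists rC : T * ('I_m.+1 -> T),
    [/\ R rC.1, forall k, R (rC.2 k) & x ^+ i = rC.1 + c * \sum_(k < m.+1) rC.2 k * x ^+ k].
  move=> i; have [r [s' [hr ->]]] := HW (x ^+ i).
  have [v [vR ev]] := VT s'.
  by exists (r, v); split => //=; rewrite -ev.
case/fin_all_exists => f hf.
pose y : 'cV[T]_m.+1 := \col_i x ^+ i.
pose rv : 'cV[T]_m.+1 := \col_i (f i).1.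
pose Cm : 'M[T]_m.+1 := \matrix_(i, k) (f i).2 k.
pose M : 'M[T]_m.+1 := 1%:M - c *: Cm.
have MR : forall i k, R (M i k).
  move=> i k; rewrite !mxE; case: (HR) => _ hB _; apply: hB.
    by case: (i == k); [rewrite mulr1n; case: HR | rewrite mulr0n; exact: sr0].
  by apply: srM => //; have [_ h _] := hf i.
have My : M *m y = rv.
  rewrite mulmxBl mul1mx -scalemxAl; apply/matrixP => i j0.
  rewrite !mxE (ord1 j0); have [_ _ ->] := hf i.
  have -> : \sum_j1 Cm i j1 * y j1 0 = \sum_(k < m.+1) (f i).2 k * x ^+ k.
    by apply: eq_bigr => k _; rewrite !mxE.
  by rewrite addrK.
have dy : (\det M) *: y = \adj M *m rv by rewrite -My mulmxA mul_adj_mx mul_scalar_mx.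
have Rdx : forall i : 'I_m.+1, R (\det M * x ^+ i).
  move=> i; have := congr1 (fun A : 'cV[T]_m.+1 => A i 0) dy; rewrite /= !mxE => ->.
  apply: srsum => // k _; apply: srM => //; first exact: sradj.
  by rewrite mxE; have [h _ _] := hf k.
have Id : conductor R (\det M).
  move=> t; have [v [vR ->]] := VT t; rewrite mulr_suml.
  by apply: srsum => // k _; rewrite mulrAC -mulrA; apply: srM.
have Jd1 : J (\det M - \det (1%:M : 'M[T]_m.+1)).
  apply: iddet => // i k; rewrite [M i k]mxE.
  by rewrite addrAC subrr add0r !mxE -mulrN mulrC; apply: JM.
apply: J1; rewrite det1 in Jd1.
have -> : (1 : T) = \det M - (\det M - 1) by ring.
by apply: JB => //; apply: IJ.
Qed.
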